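(* Let $\mu,\mu_2$ be the first and second moments of some probability distribution on $[0,1]$, and set $\sigma^2=\mu_2-\mu^2$. Let $\mathcal{D}$ be the set of probability distributions on $[0,1]$ with $E(X)=\mu$ and $E(X^2)=\mu_2$. For a distribution $F$ write $F(x)=P(X\le x)$ and $F_{-}(x)=P(X<x)$ for $X\sim F$. Fix $x\in(0,1)$ and define $\mu_2^*$ as follows: - if $x\le\mu$, let $F_1$ be the distribution on $\{x,1\}$ with $P(X=x)=(1-\mu)/(1-x)$ and $P(X=1)=1-(1-\mu)/(1-x)$; $\mu_2^*$ is its second moment, with variance $\sigma_*^2=(1-\mu)(\mu-x)$; - if $x>\mu$, let $F_2$ be the distribution on $\{0,x\}$ with $P(X=x)=\mu/x$ and $P(X=0)=1-\mu/x$; $\mu_2^*$ is its second moment, with variance $\sigma_*^2=x(x-\mu)$. Suppose $\mu_2\ge\mu_2^*$. Let $F_4$ be the distribution supported on $\{0,x,1\}$ satisfying both moment constraints. Its masses are $$P(X=x)=p_4=\frac{\mu-\mu_2}{x-x^2},\qquad P(X=1)=\mu-xp_4,\qquad P(X=0)=1-p_4-P(X=1).$$ Then for every $G\in\mathcal{D}$ we have $G(x)\le F_4(x)$ and $G_{-}(x)\ge F_{4-}(x)$. That is, $F_4$ maximizes $F(x)$ and minimizes $F_{-}(x)$ subject to the moment constraints.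
   Context: This setting models a single histogram bucket rescaled to $[0,1]$, for which the mean $\mu$ and the second moment $\mu_2$ of the observations in the bucket are known. *)

(* Defs.v *)
From HB Require Import structures.
From mathcomp Require Import all_boot all_order all_algebra.
From mathcomp Require Import all_classical all_reals all_analysis.
Set Implicit Arguments. Unset Strict Implicit. Unset Printing Implicit Defensive.
Import Order.TTheory GRing.Theory Num.Theory.
Local Open Scope classical_set_scope.
Local Open Scope ring_scope.

Definition moment_dist (R : realType) (mu mu2 : R) (G : probability R R) : Prop :=
  [/\ G `[0%R, 1%R]%classic = 1%E,
      (\int[G]_(y in `[0%R, 1%R]%classic) (y%:E) = mu%:E)%E &
      (\int[G]_(y in `[0%R, 1%R]%classic) ((y ^+ 2)%:E) = mu2%:E)%E].

Definition mu2star (R : realType) (mu x : R) : R :=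
  if x <= mu then
    x ^+ 2 * ((1 - mu) / (1 - x)) + 1 ^+ 2 * (1 - (1 - mu) / (1 - x))
  else x ^+ 2 * (mu / x) + 0 ^+ 2 * (1 - mu / x).

Definition p4x (R : realType) (mu mu2 x : R) : R := (mu - mu2) / (x - x ^+ 2).
Definition p41 (R : realType) (mu mu2 x : R) : R := mu - x * p4x mu mu2 x.
Definition p40 (R : realType) (mu mu2 x : R) : R :=
  1 - p4x mu mu2 x - p41 mu mu2 x.

Definition F4 (R : realType) (mu mu2 x : R) (A : set R) : \bar R :=
  ((p40 mu mu2 x)%:E * \d_(0%R : R) A + (p4x mu mu2 x)%:E * \d_(x : R) A
   + (p41 mu mu2 x)%:E * \d_(1%R : R) A)%E.

Definition dist_le (R : realType) (F : set R -> \bar R) (x : R) : \bar R :=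
  F `]-oo, x]%classic.
Definition dist_lt (R : realType) (F : set R -> \bar R) (x : R) : \bar R :=
  F `]-oo, x[%classic.

(* Main.v *)
Require Import Defs.
From HB Require Import structures.
From mathcomp Require Import all_boot all_order all_algebra.
From mathcomp Require Import all_classical all_reals all_analysis.
From mathcomp Require Import measurable_realfun.
From mathcomp Require Import ring lra.
Import Order.TTheory GRing.Theory Num.Theory.
Local Open Scope classical_set_scope.
Local Open Scope ring_scope.

Section S.
Variables (R : realType) (G : probability R R).
Let I : set R := `[0%R, 1%R]%classic.
Let mI : measurable I. Proof. exact: measurable_itv. Qed.

Lemma int_bdd (f : R -> R) (M : R) : measurable_fun I f ->
  (forall y, I y -> `|f y| <= M) -> G.-integrable I (fun y => (f y)%:E).
Proof.
move=> mf fM.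
apply: (@le_integrable _ _ _ G I mI _ (cst M%:E)).
- exact/measurable_EFinP.
- move=> y Iy /=; 
  rewrite lee_fin (le_trans (fM y Iy))// ler_norm//.
apply/integrableP; split; first exact: measurable_cst.
rewrite integral_cst //.
apply: lte_mul_pinfty => //. by apply: (le_lt_trans (probability_le1 G mI)); exact: ltry. Qed.

Lemma I01 y : I y -> 0 <= y <= 1.
Proof. by rewrite /I /= in_itv. Qed.

Lemma i1 : G.-integrable I (fun y => y%:E).
Proof.
  apply: (@int_bdd id 1); first exact: measurable_id.
  by move=> y /I01 /andP[y0 y1]; rewrite ger0_norm.
Qed.
Lemma i2 : G.-integrable I (fun y => (y ^+ 2)%:E).
Proof.
  apply: (@int_bdd (fun y => y ^+ 2) 1); first exact/measurable_funX/measurable_id.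
  move=> y /I01 /andP[y0 y1]; rewrite ger0_norm ?exprn_ge0//.
  by rewrite expr2 mulr_ile1.
Qed.
Lemma ic a : G.-integrable I (fun y => a%:E).
Proof.
  apply: (@int_bdd (fun=> a) `|a|); first exact: measurable_cst.
  by [].
Qed.

Lemma poly_int a b c : G.-integrable I (fun y => (a + b * y + c * y ^+ 2)%:E).
Proof.
apply: (eq_integrable mI _ _ _ (integrableD mI (integrableD mI (ic a) (integrableZl mI b i1)) (integrableZl mI c i2))).
by move=> y _ /=; rewrite !EFinD !EFinM.
Qed.

Lemma int_poly mu mu2 a b c : moment_dist mu mu2 G ->
  (\int[G]_(y in I) ((a + b * y + c * y ^+ 2)%:E) = (a + b * mu + c * mu2)%:E)%E.
Proof.
case=> hI h1 h2.
rewrite (eq_integral (fun y => a%:E + b%:E * y%:E + c%:E * (y ^+ 2)%:E)%E); last first.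
  by move=> y _; rewrite !EFinD !EFinM.
rewrite (integralD mI); [| exact: (integrableD mI (ic a) (integrableZl mI b i1)) | exact: (integrableZl mI c i2)].
rewrite (integralD mI); [| exact: ic | exact: (integrableZl mI b i1)].
rewrite integral_cst // (integralZl mI i1) (integralZl mI i2).
by rewrite /= hI h1 h2 mule1 -!EFinM -!EFinD.
Qed.

Lemma ind_int (A : set R) : measurable A -> G.-integrable I (fun y => (\1_A y)%:E).
Proof.
move=> mA; apply: (@int_bdd (\1_A) 1); first exact: measurable_indic.
by move=> y _; rewrite indicE; case: (y \in A); rewrite ?normr0 ?normr1.
Qed.

Lemma upper mu mu2 (A : set R) a b c : measurable A -> moment_dist mu mu2 G ->
  (forall y, 0 <= y <= 1 -> \1_A y <= a + b * y + c * y ^+ 2) ->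
  (G (A `&` I) <= (a + b * mu + c * mu2)%:E)%E.
Proof.
move=> mA hG hle; rewrite -integral_indic // -(int_poly _ _ a b c hG).
apply: le_integral => //; [exact: ind_int|exact: poly_int|].
by move=> y /set_mem /I01 /hle; rewrite lee_fin.
Qed.

Lemma lower mu mu2 (A : set R) a b c : measurable A -> moment_dist mu mu2 G ->
  (forall y, 0 <= y <= 1 -> a + b * y + c * y ^+ 2 <= \1_A y) ->
  ((a + b * mu + c * mu2)%:E <= G (A `&` I))%E.
Proof.
move=> mA hG hle; rewrite -integral_indic // -(int_poly _ _ a b c hG).
apply: le_integral => //; [exact: poly_int|exact: ind_int|].
by move=> y /set_mem /I01 /hle; rewrite lee_fin.
Qed.
Lemma restrictI (A : set R) : measurable A -> G I = 1%E -> G A = G (A `&` I).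
Proof.
move=> mA hI.
have hC : G (~` I) = 0%E by rewrite probability_setC // hI subee.
have hD : G (A `\` I) = 0%E.
  apply: (subset_measure0 _ _ _ hC) => //; [by apply: measurableD|by apply: measurableC].
by rewrite (measureDI _ mA mI) -[X in (X + _)%E]/(G (A `\` I)) hD add0e.
Qed.
End S.

Lemma mem_le (R : realType) (a y : R) : (y \in (`]-oo, a]%classic : set R)) = (y <= a).
Proof.
by apply/idP/idP => [/set_mem|h]; [rewrite /= in_itv | apply/mem_set; rewrite /= in_itv].
Qed.
Lemma mem_lt (R : realType) (a y : R) : (y \in (`]-oo, a[%classic : set R)) = (y < a).
Proof.
by apply/idP/idP => [/set_mem|h]; [rewrite /= in_itv | apply/mem_set; rewrite /= in_itv].
Qed.

Theorem mainTheorem3 (R : realType) (mu mu2 x : R) :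
  (exists P : probability R R, moment_dist mu mu2 P) ->
  0 < x < 1 ->
  mu2star mu x <= mu2 ->
  forall G : probability R R, moment_dist mu mu2 G ->
    (dist_le G x <= dist_le (F4 mu mu2 x) x)%E /\
    (dist_lt (F4 mu mu2 x) x <= dist_lt G x)%E.
Proof.
move=> _ /andP[x0 x1] _ G hG.
have hG' := hG; case: hG' => hI _ _.
have mI : measurable (`[0%R, 1%R]%classic : set R) by exact: measurable_itv.
have hC : G (~` (`[0%R, 1%R]%classic : set R)) = 0%E.
  by rewrite probability_setC // hI subee.
have x1' : 0 < 1 - x by rewrite subr_gt0.
have xx : x - x ^+ 2 != 0.
  by rewrite expr2 -{1}(mulr1 x) -mulrBr mulf_neq0 // ?gt_eqF.
have x1n : 1 - x != 0 by rewrite gt_eqF.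
have x0n : x != 0 by rewrite gt_eqF.
split.
- set A := `]-oo, x]%classic.
  have mA : measurable A by exact: measurable_itv.
  rewrite /dist_le -/A (@restrictI R G A mA hI).
  apply: (le_trans (@upper R G mu mu2 A 1 (x / (1 - x)) (- (1 - x)^-1) mA hG _)).
    move=> y /andP[y0 y1]; rewrite indicE /A mem_le.
    have ht : (1 - x)^-1 * (1 - x) = 1 by rewrite mulVf.
    have t0 : 0 < (1 - x)^-1 by rewrite invr_gt0.
    set t := (1 - x)^-1 in ht t0 *.
    case: (leP y x) => hy /=.
      have h1 : 0 <= t * y by rewrite mulr_ge0 // ltW.
      have h2 : 0 <= t * y * (x - y) by rewrite mulr_ge0 // subr_ge0.
      nra.
    have h1 : 0 <= t * ((1 - y) * (1 + y - x)).
      have a1 : 0 <= 1 - y by rewrite subr_ge0.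
      have b1 : 0 <= 1 + y - x by lra.
      by rewrite mulr_ge0 ?mulr_ge0 // ltW.
    nra.
  rewrite /F4 /A; rewrite !diracE !mem_le lexx (ltW x0) (lt_geF x1).
  rewrite /= !mule1 mule0 adde0 -EFinD lee_fin le_eqVlt; apply/orP; left; apply/eqP.
  rewrite /p40 /p41 /p4x; field.
  by rewrite xx x1n.
- set B := `]-oo, x[%classic.
  have mB : measurable B by exact: measurable_itv.
  rewrite /dist_lt -/B (@restrictI R G B mB hI).
  apply: (le_trans _ (@lower R G mu mu2 B 1 (- ((1 + x) * x^-1)) (x^-1) mB hG _)).
    rewrite /F4 /B !diracE !mem_lt x0 ltxx (lt_gtF x1) /=.
    rewrite mule1 !mule0 !adde0 lee_fin le_eqVlt; apply/orP; left; apply/eqP.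
    rewrite /p40 /p41 /p4x; field.
    by rewrite xx x0n.
  move=> y /andP[y0 y1]; rewrite indicE /B mem_lt.
  have ht : x^-1 * x = 1 by rewrite mulVf.
  have t0 : 0 < x^-1 by rewrite invr_gt0.
  set t := x^-1 in ht t0 *.
  case: (ltP y x) => hy /=.
    have h2 : 0 <= t * y * (1 + x - y).
      have : 0 <= 1 + x - y by lra.
      by move=> h; rewrite mulr_ge0 // mulr_ge0 // ltW.
    nra.
  have h1 : 0 <= t * ((y - x) * (1 - y)).
    have a1 : 0 <= 1 - y by rewrite subr_ge0.
    have b1 : 0 <= y - x by rewrite subr_ge0.
    by rewrite mulr_ge0 ?mulr_ge0 // ltW.
  nra.
Qed.
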